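(* Let $p\geq1$, let $\tau$ be Lebesgue measure on $\mathbb R$, let $\alpha(t)=t+1$, let $w:\mathbb R\to(0,\infty)$ be continuous with $w$ and $1/w$ bounded, and let $T_{\alpha,w}f:=w\cdot(f\circ\alpha)$ on $L^p(\mathbb R,\tau)$. Suppose there is $l\in\mathbb Z$ with $$\beta:=\inf\Big\{\prod_{k=1}^n(w\circ\alpha^{-k})(t):\ t\in[l,l+1],\ n\in\mathbb N\Big\}>0,$$ and let $N\in\mathbb N$ be such that $\alpha^n([l,l+1])\cap[l,l+1]=\varnothing$ for all $n\geq N$. Then the set $$\{f\in L^p(\mathbb R,\tau):\ \|T_{\alpha,w}^nf-\chi_{[l,l+1]}\|_p\geq1\ \text{for all } n\geq N\}$$ is not $\sigma$-porous in $L^p(\mathbb R,\tau)$.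
   Context: $\alpha^{n}(t)=t+n$ and $\alpha^{-k}(t)=t-k$. Porosity: Let $X$ be a metric space and $0<\lambda<1$. A set $E\subseteq X$ is $\lambda$-porous at $x\in E$ if for each $\delta>0$ there is $y\in B(x;\delta)\setminus\{x\}$ with $B(y;\lambda\, d(x,y))\cap E=\varnothing$; $E$ is $\lambda$-porous if it is $\lambda$-porous at each of its points; $E$ is $\sigma$-$\lambda$-porous if it is a countable union of $\lambda$-porous subsets of $X$. A set is called $\sigma$-porous if it is $\sigma$-$\lambda$-porous for some $\lambda\in(0,1)$; ''not $\sigma$-porous'' means not $\sigma$-$\lambda$-porous for any $\lambda\in(0,1)$. *)

(* Defs.v *)
From HB Require Import structures.
From mathcomp Require Import all_boot all_order all_algebra.
From mathcomp Require Import all_classical all_reals all_analysis.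
Set Implicit Arguments. Unset Strict Implicit. Unset Printing Implicit Defensive.
Import Order.TTheory GRing.Theory Num.Theory.
Local Open Scope classical_set_scope.
Local Open Scope ring_scope.

(* Since L^p consists of a.e.-classes, we work with
   representatives; "y <> x" in the quotient is rendered as 0 < d x y. *)
Definition porous_at (M : Type) (R : realType) (X : set M) (d : M -> M -> R)
  (lam : R) (E : set M) (x : M) : Prop :=
  forall delta : R, 0 < delta ->
    exists y, X y /\ 0 < d x y /\ d x y < delta /\
      (forall z, X z -> d y z < lam * d x y -> ~ E z).

Definition porous (M : Type) (R : realType) (X : set M) (d : M -> M -> R)
  (lam : R) (E : set M) : Prop :=
  forall x, E x -> porous_at X d lam E x.

Definition sigma_porous (M : Type) (R : realType) (X : set M)
  (d : M -> M -> R) (lam : R) (E : set M) : Prop :=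
  exists F : nat -> set M, (forall n, porous X d lam (F n)) /\
    E = \bigcup_n F n.

Definition sigma_porous_any (M : Type) (R : realType) (X : set M)
  (d : M -> M -> R) (E : set M) : Prop :=
  exists lam : R, 0 < lam /\ lam < 1 /\ sigma_porous X d lam E.

Definition Lp (R : realType) (p : R) : set (R -> R) :=
  [set f | measurable_fun [set: R] f /\
           ('N[@lebesgue_measure R]_(p%:E) [EFin \o f] < +oo)%E].

Definition Lpdist (R : realType) (p : R) (f g : R -> R) : R :=
  fine ('N[@lebesgue_measure R]_(p%:E) [EFin \o (f \- g)]).

Definition Twc (R : realType) (w : R -> R) (f : R -> R) : R -> R :=
  fun t => w t * f (t + 1).

(* Main.v *)
Require Import Defs.
From HB Require Import structures.
From mathcomp Require Import all_boot all_order all_algebra.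
From mathcomp Require Import all_classical all_reals all_analysis.
From mathcomp Require Import measurable_realfun.
From mathcomp Require Import lra.
Import Order.TTheory GRing.Theory Num.Theory numFieldNormedType.Exports.
Local Open Scope classical_set_scope.
Local Open Scope ring_scope.
Section Pt.
Variable R : realType.

Lemma pt_bound (u : nat -> R) (k : nat) (h : R) :
  (forall m, \sum_(0 <= j < m) `|u (k + j).+1 - u (k + j)| <= h) ->
  cvgn u /\ `|u k - limn u| <= h.
Proof.
move=> hb.
pose d := fun j => u (k + j).+1 - u (k + j).
have cn : cvgn [normed series d].
  apply: nondecreasing_is_cvgn.
    by apply: nondecreasing_series => j _; rewrite normr_ge0.
  by exists h => _ [m _ <-]; rewrite /series /=; exact: hb.
have cs := normed_cvg cn.
have E : (fun m => u (m + k)%N) = (fun m => u k + series d m).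
  apply/funext; elim => [|m IH]; first by rewrite /series /= big_geq // addr0.
  rewrite /series /= big_nat_recr //= -/(series d m) addrA -IH /d.
  by rewrite addSn (addnC m) addrC subrK.
have ush : (fun m => u (m + k)%N) @ \oo --> u k + limn (series d).
  by rewrite E; apply: cvgD; [exact: cvg_cst | exact: cs].
have uc : u @ \oo --> u k + limn (series d).
  by rewrite -(cvg_shiftn k).
split; first by apply/cvg_ex; eexists; exact: uc.
rewrite (cvg_lim _ uc) // opprD addrA subrr add0r normrN.
apply: le_trans (lim_series_norm cn) _.
apply: limr_le => //; apply: nearW => m.
exact: hb.
Qed.

End Pt.
Section Shift.
Variable R : realType.
Local Notation mu := (@lebesgue_measure R).

Lemma shift_int (a : R) (h : R -> \bar R) : measurable_fun setT h ->
  (forall t, (0 <= h t)%E) ->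
  (\int[mu]_t h (t + a)%R = \int[mu]_t h t)%E.
Proof.
move=> mh h0.
have mphi : measurable_fun (T:=measurableTypeR R) (U:=measurableTypeR R) setT
    (fun t : R => t + a).
  by apply: continuous_measurable_fun => x; apply: continuousD => //; exact: cvg_cst.
pose nu := measure_function_pushforward__canonical__measure_function_Measure mu mphi.
have E : forall A, measurable A -> mu A = nu A.
  apply: lebesgue_measure_unique => _ [[x1 x2] _ <-].
  rewrite /nu /= /pushforward.
  have -> : (fun t : R => t + a) @^-1` `]x1, x2] = `]x1 - a, x2 - a]%classic.
    apply/seteqP; split => t /=; rewrite !in_itv /= => /andP[h1 h2]; apply/andP; split; lra.
  rewrite !lebesgue_measure_itv /= !lte_fin ltrBlDr subrK.
  by case: ifP => // _; rewrite -!EFinD; congr (_%:E); lra.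
have := ge0_integral_pushforward mphi mu measurableT mh (fun t _ => h0 t).
rewrite preimage_setT => <-.
apply: eq_measure_integral => A mA _.
exact: (esym (E A mA)).
Qed.

End Shift.
Section Aux.
Variables (R : realType) (p : R).
Hypothesis hp : 1 <= p.
Local Notation mu := (@lebesgue_measure R).
Local Notation Np f := ('N[mu]_(p%:E)[EFin \o (f)%R])%E.

Lemma p_gt0 : 0 < p. Proof. by apply: lt_le_trans hp. Qed.
Lemma p_neq0 : p != 0. Proof. by rewrite gt_eqF // p_gt0. Qed.

Lemma mpow {f : R -> R} : measurable_fun setT f ->
  measurable_fun setT (fun x => (`|f x| `^ p)%:E).
Proof.
move=> mf; apply/measurable_EFinP.
apply: (measurableT_comp (measurable_powR _)).
exact: measurableT_comp.
Qed.

Lemma NpE (f : R -> R) : (Np f = (\int[mu]_x (`|f x| `^ p)%:E) `^ p^-1)%E.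
Proof. by rewrite unlock. Qed.

Lemma Np_pow (f : R -> R) : (Np f `^ p = \int[mu]_x (`|f x| `^ p)%:E)%E.
Proof. by rewrite poweR_Lnorm ?p_neq0. Qed.

Lemma Np_le {f g : R -> R} : measurable_fun setT f -> measurable_fun setT g ->
  (forall x, `|f x| <= `|g x|) -> (Np f <= Np g)%E.
Proof.
move=> mf mg fg; rewrite !NpE; apply: gt0_ler_poweR.
- by rewrite invr_ge0 ltW // p_gt0.
- by rewrite in_itv /= leey andbT integral_ge0 // => x _; rewrite lee_fin powR_ge0.
- by rewrite in_itv /= leey andbT integral_ge0 // => x _; rewrite lee_fin powR_ge0.
apply: ge0_le_integral => //.
- exact: mpow.
- exact: mpow.
move=> x _; rewrite lee_fin; apply: ge0_ler_powR; rewrite ?nnegrE //; try exact: fg; exact: ltW p_gt0.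
Qed.


Lemma Np_eqabs {f g : R -> R} : measurable_fun setT f -> measurable_fun setT g ->
  (forall x, `|f x| = `|g x|) -> Np f = Np g.
Proof.
move=> mf mg fg; apply/le_anti/andP; split; apply: Np_le => // x; by rewrite fg.
Qed.

Lemma Np_tri {f g : R -> R} : measurable_fun setT f -> measurable_fun setT g ->
  (Np (f \+ g)%R <= Np f + Np g)%E.
Proof. by move=> mf mg; apply: minkowski_EFin. Qed.

Lemma Lp_meas {f} : Lp p f -> measurable_fun setT f.
Proof. by case. Qed.

Lemma Lp_fin {f} : Lp p f -> Np f \is a fin_num.
Proof.
case=> _ h; rewrite ge0_fin_numE //; exact: Lnorm_ge0.
Qed.

Lemma Lp_add {f g} : Lp p f -> Lp p g -> Lp p (f \+ g).
Proof.
move=> hf hg; split; first by apply: measurable_funD; apply: Lp_meas.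
have H := Np_tri (Lp_meas hf) (Lp_meas hg).
apply: (le_lt_trans H).
by apply: lte_add_pinfty; [case: hf|case: hg].
Qed.

Lemma Lp_opp {f} : Lp p f -> Lp p (\- f).
Proof.
move=> hf; have mf := Lp_meas hf.
have mN : measurable_fun setT (\- f) by apply: measurableT_comp.
split => //; rewrite (Np_eqabs mN mf) => [|x]; [by case: hf|by rewrite /= normrN].
Qed.

Lemma Lp_sub {f g} : Lp p f -> Lp p g -> Lp p (f \- g).
Proof. by move=> hf hg; apply: (Lp_add hf (Lp_opp hg)). Qed.

Lemma dist_fin {f g} : Lp p f -> Lp p g -> (Lpdist p f g)%:E = Np (f \- g).
Proof. by move=> hf hg; rewrite /Lpdist fineK //; apply: Lp_fin; apply: Lp_sub. Qed.

Lemma dist_ge0 f g : 0 <= Lpdist p f g.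
Proof. by rewrite /Lpdist fine_ge0 // Lnorm_ge0. Qed.

Lemma dist_sym {f g} : Lp p f -> Lp p g -> Lpdist p f g = Lpdist p g f.
Proof.
move=> hf hg; apply: EFin_inj; rewrite !dist_fin //.
apply: Np_eqabs; try (apply: Lp_meas; apply: Lp_sub => //).
by move=> x; rewrite /= distrC.
Qed.

Lemma dist_tri {f g h} : Lp p f -> Lp p g -> Lp p h ->
  Lpdist p f h <= Lpdist p f g + Lpdist p g h.
Proof.
move=> hf hg hh; rewrite -lee_fin EFinD !dist_fin //.
have -> : f \- h = (f \- g) \+ (g \- h).
  by apply/funext => x /=; rewrite addrA subrK.
by apply: Np_tri; apply: Lp_meas; apply: Lp_sub.
Qed.


Lemma complete (c : nat -> R -> R) (e B : nat -> R) :
  (forall k, Lp p (c k)) ->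
  (forall k, Lpdist p (c k) (c k.+1) <= e k) ->
  (forall k m, \sum_(0 <= j < m) e (k + j)%N <= B k) ->
  exists f, Lp p f /\ forall k, Lpdist p (c k) f <= B k.
Proof.
move=> cL ce eB.
have mc k : measurable_fun setT (c k) := Lp_meas (cL k).
have md k : measurable_fun setT (fun t => `|c k.+1 t - c k t|).
  by apply: measurableT_comp; [exact: normr_measurable | exact: measurable_funB].
pose S k m t := \sum_(0 <= j < m) `|c (k + j).+1 t - c (k + j) t|.
have mS k m : measurable_fun setT (S k m).
  by apply: measurable_sum => j; exact: md.
have S0 k m t : 0 <= S k m t by apply: sumr_ge0.
have SS k m t : S k m.+1 t = S k m t + `|c (k + m).+1 t - c (k + m) t|.
  by rewrite /S big_nat_recr.
have NS k m : (Np (S k m) <= (\sum_(0 <= j < m) e (k + j)%N)%:E)%E.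
  elim: m => [|m IH].
    rewrite big_geq // (_ : S k 0 = fun=> 0); last first.
      by apply/funext => t; rewrite /S big_geq.
    rewrite (_ : EFin \o _ = cst 0%E); last by apply/funext.
    by rewrite Lnorm0 // eqe p_neq0.
  have -> : S k m.+1 = (S k m \+ (fun t => `|c (k+m).+1 t - c (k+m) t|))%R.
    by apply/funext => t; exact: SS.
  apply: le_trans (Np_tri (mS k m) (md _)) _.
  rewrite big_nat_recr //= EFinD; apply: leeD => //.
  have mdd : measurable_fun setT (c (k+m).+1 \- c (k+m))%R.
    exact: measurable_funB.
  rewrite (Np_eqabs (md _) mdd); last by move=> t; rewrite /= normr_id.
  by rewrite -dist_fin // dist_sym // lee_fin; exact: ce.
have B0 k : 0 <= B k by have := eB k 0%N; rewrite big_geq.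
have NSB k m : (Np (S k m) <= (B k)%:E)%E.
  by apply: le_trans (NS k m) _; rewrite lee_fin eB.
pose g k m t := ((`|S k m t| `^ p)%:E : \bar R).
have gnd k t : nondecreasing_seq (fun m => g k m t).
  apply/nondecreasing_seqP => m; rewrite lee_fin; apply: ge0_ler_powR.
  - exact: ltW p_gt0.
  - by rewrite nnegrE.
  - by rewrite nnegrE.
  by rewrite !ger0_norm // SS lerDl normr_ge0.
pose H k t := limn (fun m => g k m t).
have mg k m : measurable_fun setT (g k m) := mpow (mS k m).
have mH k : measurable_fun setT (H k).
  apply: (emeasurable_fun_cvg (fun m => g k m)) => // t _.
  exact: ereal_nondecreasing_is_cvgn.
have IH k : (\int[mu]_t H k t <= ((B k) `^ p)%:E)%E.
  rewrite /H monotone_convergence //; try exact: mg;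
    try (by move=> m t _; rewrite lee_fin powR_ge0); try (by move=> t _; exact: gnd).
  apply: lime_le.
    apply: ereal_nondecreasing_is_cvgn => m n mn; apply: ge0_le_integral => //;
      try exact: mg; try (by move=> t _; rewrite lee_fin powR_ge0).
    by move=> t _; exact: gnd.
  apply: nearW => m; rewrite -Np_pow -poweR_EFin; apply: gt0_ler_poweR.
  - exact: ltW p_gt0.
  - by rewrite in_itv /= leey andbT Lnorm_ge0.
  - by rewrite in_itv /= leey andbT lee_fin B0.
  exact: NSB.
pose f t := fine (limn_esup (fun m => (c m t)%:E)).
have mf : measurable_fun setT f.
  apply: measurableT_comp; first exact: fine_measurable.
  by apply: measurable_fun_limn_esup => m; exact/measurable_EFinP.
have Hge k t m : (g k m t <= H k t)%E.
  apply: lime_ge; first exact: ereal_nondecreasing_is_cvgn.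
  by exists m => // n /= mn; exact: gnd.
have key k t : ((`|c k t - f t| `^ p)%:E <= H k t)%E.
  have [->|Hfin] := eqVneq (H k t) +oo%E; first exact: leey.
  have H0 : (0 <= H k t)%E by apply: le_trans (Hge k t 0%N); rewrite lee_fin powR_ge0.
  have Hfn : H k t \is a fin_num by rewrite ge0_fin_numE // ltey.
  set h := fine (H k t).
  have h0 : 0 <= h by rewrite fine_ge0.
  have Sh m : S k m t <= h `^ p^-1.
    have hh : `|S k m t| `^ p <= h by rewrite -lee_fin /h fineK //; exact: Hge.
    rewrite -[S k m t]powRr1 // -(mulfV p_neq0) powRrM.
    apply: ge0_ler_powR; rewrite ?nnegrE ?powR_ge0 //.
      by rewrite invr_ge0 ltW // p_gt0.
    by rewrite -(ger0_norm (S0 k m t)).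
  have [cu bd] := @pt_bound R (fun m => c m t) k (h `^ p^-1) Sh.
  have fE : f t = limn (fun m => c m t).
    rewrite /f is_cvg_limn_esupE; last first.
      by apply/cvg_ex; exists (limn (fun m => c m t))%:E; apply: (cvg_comp _ _ cu).
    by rewrite (EFin_lim cu).
  rewrite fE -(fineK Hfn) lee_fin -/h.
  rewrite -[h in _ <= h]powRr1 // -(mulVf p_neq0) powRrM.
  apply: ge0_ler_powR; rewrite ?nnegrE ?powR_ge0 //.
  exact: ltW p_gt0.
have Ik k : (\int[mu]_t (`|c k t - f t| `^ p)%:E <= ((B k) `^ p)%:E)%E.
  apply: le_trans (IH k); apply: ge0_le_integral => //;
    try (by move=> t _; rewrite lee_fin powR_ge0); try exact: mH.
    exact: (@mpow (c k \- f)%R (measurable_funB (mc k) mf)).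
have Nk k : (Np (c k \- f) <= (B k)%:E)%E.
  rewrite NpE; apply: le_trans (gt0_ler_poweR _ _ _ (Ik k)) _.
  - by rewrite invr_ge0 ltW // p_gt0.
  - by rewrite in_itv /= leey andbT integral_ge0 // => x _; rewrite lee_fin powR_ge0.
  - by rewrite in_itv /= leey andbT lee_fin powR_ge0.
  by rewrite poweR_EFin -powRrM mulfV ?p_neq0 // powRr1.
have mcf : measurable_fun setT (c 0%N \- f)%R := measurable_funB (mc 0%N) mf.
have mNcf : measurable_fun setT (\- (c 0%N \- f))%R.
  by apply: measurableT_comp.
have fL : Lp p f.
  split => //.
  have -> : Np f = Np (c 0%N \+ \- (c 0%N \- f))%R.
    apply: Np_eqabs => //; first exact: measurable_funD.
    by move=> t /=; rewrite opprB addrC subrK.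
  apply: (le_lt_trans (Np_tri (mc 0%N) mNcf)).
  rewrite (Np_eqabs mNcf mcf); last by move=> t; rewrite /= normrN.
  apply: lte_add_pinfty; first by case: (cL 0%N).
  exact: le_lt_trans (Nk 0%N) (ltry _).
exists f; split => // k; rewrite -lee_fin dist_fin //; exact: Nk.
Qed.


Lemma dist_self (c : R -> R) : Lpdist p c c = 0.
Proof.
rewrite /Lpdist (_ : EFin \o (c \- c)%R = cst 0%E); last first.
  by apply/funext => t /=; rewrite subrr.
by rewrite Lnorm0 // eqe p_neq0.
Qed.

Lemma not_sp_ball (E : set (R -> R)) (c0 : R -> R) (r0 : R) :
  Lp p c0 -> 0 < r0 -> (forall z, Lp p z -> Lpdist p c0 z <= r0 -> E z) ->
  (E `<=` Lp p) -> ~ sigma_porous_any (Lp p) (Lpdist p) E.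
Proof.
move=> c0L r0p ball EL [lam [l0 [l1 [F [Fpor EF]]]]].
have FE k x : F k x -> E x by move=> Fx; rewrite EF; exists k.
have step k (c : R -> R) (r : R) : Lp p c -> 0 < r -> exists c' r',
    [/\ Lp p c', 0 < r', Lpdist p c c' + r' <= r &
     forall z, Lp p z -> Lpdist p c' z <= r' -> ~ F k z].
  move=> cL rp.
  have [[x [Fx dx]]|nx] := pselect (exists x, F k x /\ Lpdist p c x < r / 2).
    have xL := EL _ (FE _ _ Fx).
    have r4 : 0 < r / 4 by rewrite divr_gt0.
    have [y [yL [dpos [dlt hole]]]] := Fpor k x Fx (r / 4) r4.
    exists y, (lam * Lpdist p x y / 2); split => //.
    - by rewrite divr_gt0 // mulr_gt0.
    - have t1 := dist_tri cL xL yL.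
      have t3 := dist_ge0 x y.
      have t2 : lam * Lpdist p x y <= Lpdist p x y.
        by rewrite ler_piMl // ltW.
      lra.
    - move=> z zL dz; apply: hole => //.
      apply: le_lt_trans dz _.
      by rewrite ltr_pdivrMr // ltr_pMr ?ltr1n // mulr_gt0.
  exists c, (r / 4); split => //.
  - by rewrite divr_gt0.
  - by rewrite dist_self add0r ler_pdivrMr // ler_pMr // ler1n.
  move=> z zL dz Fz; apply: nx; exists z; split => //.
  apply: le_lt_trans dz _.
  by rewrite ltr_pM2l // ltf_pV2 ?posrE // ltr_nat.
have step' : forall kc : nat * ((R -> R) * R), exists cr : (R -> R) * R,
    Lp p kc.2.1 -> 0 < kc.2.2 ->
    [/\ Lp p cr.1, 0 < cr.2, Lpdist p kc.2.1 cr.1 + cr.2 <= kc.2.2 &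
     forall z, Lp p z -> Lpdist p cr.1 z <= cr.2 -> ~ F kc.1 z].
  move=> [k [c r]] /=.
  have [cL|ncL] := pselect (Lp p c); last by exists (c, r).
  have [rp|nrp] := pselect (0 < r); last by exists (c, r).
  have [c' [r' H]] := step k c r cL rp.
  by exists (c', r').
have [phi hphi] := choice step'.
pose s := fix s n := if n is k.+1 then phi (k, s k) else (c0, r0).
have inv k : Lp p (s k).1 /\ 0 < (s k).2.
  elim: k => [|k [IH1 IH2]] //=.
  by have [] := hphi (k, s k) IH1 IH2.
have prop k : Lpdist p (s k).1 (s k.+1).1 + (s k.+1).2 <= (s k).2 /\
   forall z, Lp p z -> Lpdist p (s k.+1).1 z <= (s k.+1).2 -> ~ F k z.
  have [I1 I2] := inv k.
  by have [] := hphi (k, s k) I1 I2.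
have H1 : forall k, Lpdist p (s k).1 (s k.+1).1 <= (s k).2 - (s k.+1).2.
  move=> k /=; have [h _] := prop k; lra.
have H2 : forall k m, \sum_(0 <= j < m) ((s (k + j)%N).2 - (s (k + j)%N.+1).2)
    <= (s k).2.
  move=> k m /=.
  have -> : \sum_(0 <= j < m) ((s (k + j)%N).2 - (s (k + j)%N.+1).2) =
            (s k).2 - (s (k + m)%N).2.
    elim: m => [|m IH]; first by rewrite big_geq // addn0 subrr.
    by rewrite big_nat_recr //= IH addnS; lra.
  have := (inv (k + m)%N).2; lra.
have [f [fL fd]] := @complete (fun k => (s k).1) (fun k => (s k).2 - (s k.+1).2)
    (fun k => (s k).2) (fun k => (inv k).1) H1 H2.
have : (\bigcup_n F n) f by rewrite -EF; apply: ball => //; exact: fd 0%N.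
case=> k _ Fk.
by have [_ hole] := prop k; apply: (hole f fL (fd k.+1)).
Qed.

Section PartD.
Variable w : R -> R.
Hypothesis wc : continuous w.

Let T := Twc w.

Lemma mshift (a : R) : measurable_fun setT (fun t : R => t + a).
Proof. by apply: continuous_measurable_fun => x; apply: continuousD => //; exact: cvg_cst. Qed.

Lemma iterE n z t : iter n T z t =
  (\prod_(1 <= k < n.+1) w (t + n%:R - k%:R)) * z (t + n%:R).
Proof.
elim: n t => [|n IH] t; first by rewrite big_geq // mul1r addr0.
rewrite iterS /T /Twc IH [in RHS]big_nat_recr //= mulrA [w t * _]mulrC.
congr (_ * _ * _).
- by apply: eq_bigr => k _; congr (w _); rewrite -natr1; lra.
- by congr (w _); lra.
- by rewrite -natr1; congr (z _); lra.
Qed.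

Lemma iter_meas n z : measurable_fun setT z -> measurable_fun setT (iter n T z).
Proof.
move=> mz; elim: n => [|n IH] //=.
apply: measurable_funM; first exact: continuous_measurable_fun.
exact: measurableT_comp IH (mshift 1).
Qed.

End PartD.

Local Notation Ip f := (\int[mu]_x (`|(f)%R x| `^ p)%:E)%E.

Lemma Lp_I {f : R -> R} : measurable_fun setT f -> (Ip f < +oo)%E -> Lp p f.
Proof. by move=> mf hI; split => //; rewrite NpE; exact: poweR_lty. Qed.

Lemma I_Lp {f : R -> R} : Lp p f -> (Ip f < +oo)%E.
Proof. by case=> _ h; rewrite -Np_pow; exact: poweR_lty. Qed.

Lemma I_ge0 (f : R -> R) : (0 <= Ip f)%E.
Proof. by apply: integral_ge0 => x _; rewrite lee_fin powR_ge0. Qed.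

Lemma I_indJ (J : set R) (mJ : measurable J) (hJ : mu J = 1%E) (k : R) :
  Ip (fun t => k * \1_J t) = (`|k| `^ p)%:E.
Proof.
transitivity (\int[mu]_x ((`|k| `^ p)%:E * (\1_J x)%:E))%E.
  apply: eq_integral => x _; rewrite -EFinM; congr (_%:E).
  rewrite indicE; case: (x \in J) => /=; rewrite ?mulr1 ?mulr0 ?normr0 ?powR0 //.
  exact: p_neq0.
rewrite ge0_integralZl_EFin ?powR_ge0 //.
- by rewrite integral_indic // setIT -[in RHS](mule1 (_%:E)); congr (_ * _)%E; exact: hJ.
all: try (by move=> x _; rewrite lee_fin indicE ler0n).
by apply/measurable_EFinP; exact: measurable_indic.
Qed.


Lemma ball_E (w : R -> R) (J : set R) (n : nat) (beta M : R) (z : R -> R) :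
  continuous w -> measurable J -> mu J = 1%E -> 0 < beta ->
  (forall t, `|w t| <= M) ->
  (forall t, J (t + n%:R) -> beta <= \prod_(1 <= k < n.+1) w (t + n%:R - k%:R)) ->
  (forall t, J (t + n%:R) -> ~ J t) ->
  Lp p z -> Lpdist p (fun t => (beta^-1 + 1) * \1_J t) z <= 1 ->
  1 <= Lpdist p (iter n (Twc w) z) \1_J.
Proof.
move=> wc mJ hJ b0 wM hprod hdisj zL dz.
set C := beta^-1 + 1.
have C0 : 0 < C by rewrite /C addr_gt0 // invr_gt0.
set c0 := fun t => C * \1_J t.
have mJi : measurable_fun [set: R] (\1_J : R -> R) by exact: measurable_indic.
have mc0 : measurable_fun [set: R] c0 by apply: measurable_funM.
have c0L : Lp p c0.
  have hI : (Ip c0 < +oo)%E by rewrite /c0 I_indJ // ltry.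
  exact: (Lp_I mc0 hI).
have chiL : Lp p (\1_J : R -> R).
  have hI : (Ip (\1_J : R -> R) < +oo)%E.
    have -> : Ip (\1_J : R -> R) = Ip (fun t => 1 * \1_J t).
      by apply: eq_integral => t _; rewrite mul1r.
    by rewrite I_indJ // ltry.
  exact: (Lp_I mJi hI).
have mz := Lp_meas zL.
set Tz := iter n (Twc w) z.
have mTz : measurable_fun [set: R] Tz := iter_meas w wc n z mz.
have M0 : 0 <= M by apply: le_trans (wM 0).
have TzL : Lp p Tz.
  suff hI : (Ip Tz < +oo)%E by exact: (Lp_I mTz hI).
  set K := \prod_(1 <= k < n.+1) M.
  have K0 : 0 <= K by apply: prodr_ge0.
  have mzs : measurable_fun [set: R] (fun t => z (t + n%:R)) by exact: measurableT_comp mz (mshift _).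
  apply: (@le_lt_trans _ _ (\int[mu]_t ((K `^ p)%:E * (`|z (t + n%:R)| `^ p)%:E))%E).
    apply: ge0_le_integral => //; try (by move=> t _; rewrite lee_fin powR_ge0);
      try exact: mpow.
      apply: measurable_funeM; exact: (@mpow (fun t => z (t + n%:R))).
    move=> t _; rewrite -EFinM lee_fin -powRM //; apply: ge0_ler_powR;
      rewrite ?nnegrE ?mulr_ge0 //; try exact: ltW p_gt0.
    rewrite /Tz iterE normrM ler_wpM2r // normr_prod; apply: ler_prod => k _.
    by rewrite normr_ge0 wM.
  rewrite ge0_integralZl_EFin ?powR_ge0 //; try (by move=> t _; rewrite lee_fin powR_ge0);
    try exact: (@mpow (fun t => z (t + n%:R))).
  apply: lte_mul_pinfty; rewrite ?lee_fin ?powR_ge0 //.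
  rewrite (@shift_int R n%:R (fun t => (`|z t| `^ p)%:E)).
  - exact: I_Lp.
  - exact: mpow.
  - by move=> t; rewrite lee_fin powR_ge0.
have dL : Lp p (Tz \- \1_J)%R := Lp_sub TzL chiL.
set u := fun t => z t * \1_J t.
have mu_ : measurable_fun [set: R] u by apply: measurable_funM.
have f1 : ((beta^-1)%:E <= Np u)%E.
  have mB : measurable_fun [set: R] (u \- c0)%R by apply: measurable_funB.
  have H1 := lerB_LnormD mu mc0 mB hp.
  move: H1; rewrite (_ : (c0 \+ (u \- c0))%R = u); last first.
    by apply/funext => t /=; rewrite addrC subrK.
  apply: le_trans.
  have Nc0 : Np c0 = C%:E.
    by rewrite NpE /c0 I_indJ // poweR_EFin -powRrM mulfV ?p_neq0 // powRr1 ?gtr0_norm // ltW.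
  have Nb : (Np (u \- c0) <= 1%:E)%E.
    have mcz : measurable_fun [set: R] (c0 \- z)%R by apply: measurable_funB.
    apply: le_trans (Np_le mB mcz _) _.
      move=> t /=; rewrite /u /c0 indicE; case: (t \in J) => /=.
        by rewrite !mulr1 distrC.
      by rewrite !mulr0 subr0 normr0 normr_ge0.
    by rewrite -dist_fin // lee_fin.
  rewrite Nc0.
  have Nfin : Np (u \- c0) \is a fin_num.
    by rewrite ge0_fin_numE ?Lnorm_ge0 // (le_lt_trans Nb) // ltry.
  rewrite -(fineK Nfin) -EFinB lee_fin.
  move: Nb; rewrite -(fineK Nfin) lee_fin /C; lra.
have f2 : ((beta^-1 `^ p)%:E <= Ip u)%E.
  rewrite -Np_pow -poweR_EFin; apply: gt0_ler_poweR => //.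
  - exact: ltW p_gt0.
  - by rewrite in_itv /= leey andbT lee_fin invr_ge0 ltW.
  - by rewrite in_itv /= leey andbT Lnorm_ge0.
have mus : measurable_fun [set: R] (fun t => u (t + n%:R)) by exact: measurableT_comp mu_ (mshift _).
have mdiff : measurable_fun [set: R] (Tz \- \1_J)%R := Lp_meas dL.
have f3 : ((beta `^ p)%:E * Ip u <= Ip (Tz \- \1_J))%E.
  rewrite -(@shift_int R n%:R (fun t => (`|u t| `^ p)%:E)); last 2 first.
  - exact: mpow.
  - by move=> t; rewrite lee_fin powR_ge0.
  rewrite -ge0_integralZl_EFin ?powR_ge0 //; try (by move=> t _; rewrite lee_fin powR_ge0);
    try exact: (@mpow (fun t => u (t + n%:R))).
  apply: ge0_le_integral => //;
    try (by move=> t _; rewrite -EFinM lee_fin mulr_ge0 // powR_ge0);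
    try exact: (@mpow (Tz \- \1_J)%R);
    try (by apply: measurable_funeM; exact: (@mpow (fun t => u (t + n%:R)))).
  move=> t _; rewrite -EFinM lee_fin -powRM; [|exact: ltW b0|exact: normr_ge0]. apply: ge0_ler_powR;
    rewrite ?nnegrE ?mulr_ge0 //; try exact: (ltW p_gt0); try exact: (ltW b0).
  have [Jtn|Jtn] := pselect (J (t + n%:R)).
    rewrite /= /u indicE (mem_set Jtn) mulr1.
    rewrite [\1_J t]indicE memNset ?subr0; last exact: hdisj.
    rewrite /Tz iterE normrM ler_wpM2r //.
    exact: le_trans (hprod t Jtn) (ler_norm _).
  by rewrite /u indicE memNset // mulr0 normr0 mulr0.
have f4 : (1 <= Ip (Tz \- \1_J))%E.
  apply: le_trans f3.
  apply: le_trans (lee_wpmul2l _ f2); last by rewrite lee_fin powR_ge0.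
  rewrite -EFinM -powRM; [|exact: ltW b0|by rewrite invr_ge0 ltW].
  by rewrite mulfV ?gt_eqF // powR1 /= lee_fin.
rewrite -lee_fin dist_fin // NpE.
rewrite -(poweR1r p^-1); apply: gt0_ler_poweR => //.
- by rewrite invr_ge0 ltW // p_gt0.
- by rewrite in_itv /= leey andbT lee_fin.
- by rewrite in_itv /= leey andbT I_ge0.
Qed.
End Aux.

Theorem mainTheorem16 (R : realType) (p : R) (w : R -> R) (l : int) (N : nat) :
  1 <= p ->
  continuous w ->
  (forall t, 0 < w t) ->
  (exists M : R, forall t, `|w t| <= M) ->
  (exists M : R, forall t, `|(w t)^-1| <= M) ->
  (exists beta : R, 0 < beta /\
     forall (t : R) (n : nat), l%:~R <= t <= l%:~R + 1 ->
       beta <= \prod_(1 <= k < n.+1) w (t - k%:R)) ->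
  (forall n : nat, (N <= n)%N ->
     forall t : R, l%:~R <= t <= l%:~R + 1 ->
       ~ (l%:~R <= t + n%:R <= l%:~R + 1)) ->
  ~ sigma_porous_any (Lp p) (Lpdist p)
      [set f | Lp p f /\
         forall n : nat, (N <= n)%N ->
           1 <= Lpdist p (iter n (Twc w) f)
                  (\1_[set t : R | l%:~R <= t <= l%:~R + 1])].
Proof.
move=> hp wc _ [M wM] _ [beta [b0 hb]] hdisj.
set J := [set t : R | l%:~R <= t <= l%:~R + 1].
have JE : J = `[l%:~R, l%:~R + 1]%classic by rewrite set_itvcc.
have mJ : measurable J by rewrite JE; exact: measurable_itv.
have hJ : (@lebesgue_measure R) J = 1%E.
  rewrite JE lebesgue_measure_itv /= lte_fin ltrDl ltr01 -EFinD.
  by congr (_%:E); lra.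
have mJi : measurable_fun [set: R] (\1_J : R -> R) by exact: measurable_indic.
set c0 := fun t => (beta^-1 + 1) * \1_J t.
have mc0 : measurable_fun [set: R] c0 by apply: measurable_funM.
have c0L : Lp p c0.
  have hI : (\int[@lebesgue_measure R]_x (`|c0 x| `^ p)%:E < +oo)%E.
    by rewrite /c0 (@I_indJ R p hp) // ltry.
  exact: (@Lp_I R p c0 mc0 hI).
apply: (@not_sp_ball R p hp _ c0 1) => //.
- move=> z zL dz; split => // n Nn.
  apply: (@ball_E R p hp w _ n beta M z wc mJ hJ b0 wM _ _ zL dz).
  + by move=> t Jt; have := hb (t + n%:R) n Jt.
  + by move=> t Jtn Jt; exact: (hdisj n Nn t Jt Jtn).
- by move=> f [].
Qed.
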